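(* Let $I$ be a finite tree. An expression $\Sigma_{i_1}\Sigma_{i_2}\cdots\Sigma_{i_r}$ for a morphism of $R_0(I)$ is reduced if and only if between any two occurrences of the same letter $i$ in the word $i_1i_2\cdots i_r$ there is an occurrence of some $j$ adjacent to $i$ in $I$.
   Context: Let $I$ be a finite tree. $\mathrm{Quiv}(I)$ is the set of orientations of $I$. For $\Gamma\in\mathrm{Quiv}(I)$ and a source or sink $i$ of $\Gamma$, $s_i\Gamma$ is the orientation obtained by reversing all arrows at $i$. The groupoid $R_0(I)$ has object set $\mathrm{Quiv}(I)$ and is generated by elementary isomorphisms $\Sigma_i:\Gamma\to s_i\Gamma$ (for each $\Gamma$ and each source or sink $i$ of $\Gamma$) subject to the relations, whenever both sides are defined: (R1) $\Sigma_i^2=1$; (R2) $\Sigma_i\Sigma_j=\Sigma_j\Sigma_i$ when $i,j$ are not adjacent. Composition is right-to-left. An expression for a morphism $\Sigma:\Gamma\to\Gamma'$ is a composable word $\Sigma_{i_1}\cdots\Sigma_{i_r}$ equal to $\Sigma$ (so $i_r$ is a source or sink of $\Gamma$, $i_{r-1}$ a source or sink of $s_{i_r}\Gamma$, etc.). The length $\ell(\Sigma)$ is the minimal length of an expression for $\Sigma$, and an expression of length $\ell(\Sigma)$ is called reduced. *)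

(* Defs.v *)
From mathcomp Require Import all_boot.
From Stdlib Require Import Relations.
Set Implicit Arguments. Unset Strict Implicit. Unset Printing Implicit Defensive.

Definition is_tree (T : finType) (e : rel T) : Prop :=
  [/\ 0 < #|T|,
      (forall x y, e x y = e y x),
      (forall x, ~~ e x x),
      (forall x y, connect e x y) &
      (forall p : seq T, uniq p -> 3 <= size p -> ~~ cycle e p)].

(* An orientation Gam of the tree: Gam x y means there is an arrow x -> y. *)
Definition is_orientation (T : finType) (e : rel T) (Gam : rel T) : Prop :=
  forall x y, Gam x y = e x y && ~~ Gam y x.

Definition is_source (T : finType) (Gam : rel T) (i : T) : bool :=
  [forall j, ~~ Gam j i].
Definition is_sink (T : finType) (Gam : rel T) (i : T) : bool :=
  [forall j, ~~ Gam i j].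

Definition flip (T : finType) (Gam : rel T) (i : T) : rel T :=
  fun x y => if (x == i) || (y == i) then Gam y x else Gam x y.

Fixpoint apply_ok (T : finType) (Gam : rel T) (s : seq T) : Prop :=
  match s with
  | [::] => True
  | i :: s' => (is_source Gam i || is_sink Gam i) /\ apply_ok (flip Gam i) s'
  end.

(* The word [:: i1; ...; ir] stands for Sigma_{i1} ... Sigma_{ir}
   (composition right-to-left), so Sigma_{ir} is applied first to Gam. *)
Definition composable (T : finType) (Gam : rel T) (w : seq T) : Prop :=
  apply_ok Gam (rev w).

Inductive rel_step (T : finType) (e : rel T) (Gam : rel T) : seq T -> seq T -> Prop :=
  | step_R1 (w1 w2 : seq T) (i : T) :
      composable Gam (w1 ++ [:: i; i] ++ w2) -> composable Gam (w1 ++ w2) ->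
      rel_step e Gam (w1 ++ [:: i; i] ++ w2) (w1 ++ w2)
  | step_R2 (w1 w2 : seq T) (i j : T) :
      ~~ e i j ->
      composable Gam (w1 ++ [:: i; j] ++ w2) -> composable Gam (w1 ++ [:: j; i] ++ w2) ->
      rel_step e Gam (w1 ++ [:: i; j] ++ w2) (w1 ++ [:: j; i] ++ w2).

Definition same_morphism (T : finType) (e : rel T) (Gam : rel T) : relation (seq T) :=
  clos_refl_sym_trans (seq T) (rel_step e Gam).

Definition reduced (T : finType) (e : rel T) (Gam : rel T) (w : seq T) : Prop :=
  forall w', composable Gam w' -> same_morphism e Gam w w' -> size w <= size w'.

(* Main.v *)
Require Import Defs.
From mathcomp Require Import all_boot.
From mathcomp Require Import zify.
From Stdlib Require Import Relations FunctionalExtensionality.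
Set Implicit Arguments. Unset Strict Implicit. Unset Printing Implicit Defensive.

Lemma flipK (T : finType) (G : rel T) i : flip (flip G i) i = G.
Proof.
apply: functional_extensionality => x; apply: functional_extensionality => y.
rewrite /flip. by case: (x == i); case: (y == i).
Qed.

Lemma flipC (T : finType) (G : rel T) i j : flip (flip G i) j = flip (flip G j) i.
Proof.
apply: functional_extensionality => x; apply: functional_extensionality => y.
rewrite /flip. by case: (x == i); case: (y == i); case: (x == j); case: (y == j).
Qed.

Definition app (T : finType) (G : rel T) (s : seq T) := foldl (@flip T) G s.

Lemma apply_ok_cat (T : finType) (G : rel T) s1 s2 :
  apply_ok G (s1 ++ s2) <-> apply_ok G s1 /\ apply_ok (app G s1) s2.
Proof.
elim: s1 G => [|k s1 IH] G /=; first by tauto.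
rewrite IH; tauto.
Qed.

Lemma app_cat (T : finType) (G : rel T) s1 s2 : app G (s1 ++ s2) = app (app G s1) s2.
Proof. by rewrite /app foldl_cat. Qed.

Lemma orient_flip (T : finType) (e : rel T) (G : rel T) k :
  (forall x y, e x y = e y x) -> is_orientation e G -> is_orientation e (flip G k).
Proof.
move=> esym HG x y; rewrite /flip [(y == k) || _]orbC.
case: ((x == k) || (y == k)); [by rewrite HG esym | exact: HG].
Qed.

Lemma orient_app (T : finType) (e : rel T) (G : rel T) s :
  (forall x y, e x y = e y x) -> is_orientation e G -> is_orientation e (app G s).
Proof.
move=> esym; elim: s G => [|k s IH] G HG //=.
by apply: IH; apply: orient_flip.
Qed.

Lemma noedge (T : finType) (e : rel T) (G : rel T) x y :
  (forall x y, e x y = e y x) -> is_orientation e G -> ~~ e x y -> G x y = false /\ G y x = false.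
Proof.
move=> esym HG H; rewrite HG (negbTE H) HG esym (negbTE H); done.
Qed.

Lemma src_flip_self (T : finType) (G : rel T) i : is_source (flip G i) i = is_sink G i.
Proof. by apply: eq_forallb => j; rewrite /flip eqxx orbT. Qed.

Lemma snk_flip_self (T : finType) (G : rel T) i : is_sink (flip G i) i = is_source G i.
Proof. by apply: eq_forallb => j; rewrite /flip eqxx. Qed.

Lemma src_flip_other (T : finType) (e : rel T) (G : rel T) i k :
  (forall x y, e x y = e y x) -> is_orientation e G -> i != k -> ~~ e i k ->
  is_source (flip G k) i = is_source G i.
Proof.
move=> esym HG Hik Hn; apply: eq_forallb => j; rewrite /flip (negbTE Hik) orbF.
case: eqP => // ->; have [-> ->] := noedge esym HG Hn; done.
Qed.

Lemma snk_flip_other (T : finType) (e : rel T) (G : rel T) i k :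
  (forall x y, e x y = e y x) -> is_orientation e G -> i != k -> ~~ e i k ->
  is_sink (flip G k) i = is_sink G i.
Proof.
move=> esym HG Hik Hn; apply: eq_forallb => j; rewrite /flip (negbTE Hik) /=.
case: eqP => // ->; have [-> ->] := noedge esym HG Hn; done.
Qed.

Lemma excl (T : finType) (e : rel T) (G : rel T) i n :
  is_orientation e G -> e i n -> ~~ (is_source G i && is_sink G i).
Proof.
move=> HG Hen; apply/negP => /andP[/forallP Hs /forallP Hk].
have := HG i n. by rewrite Hen (negbTE (Hs n)) (negbTE (Hk n)).
Qed.

Lemma type_edge (T : finType) (e : rel T) (G : rel T) m k :
  (forall x y, e x y = e y x) -> is_orientation e G -> e m k -> is_source G m || is_sink G m -> is_source G m = G m k.
Proof.
move=> esym HG Hmk Hok; case Hg: (G m k).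
- case/orP: Hok => // /forallP /(_ k); by rewrite Hg.
- apply/negbTE/negP => /forallP /(_ k); by rewrite HG esym Hmk Hg.
Qed.

Fixpoint upc (T : finType) (G : rel T) (s : seq T) (i : T) : nat :=
  if s is k :: s' then ((k == i) && is_source G k) + upc (flip G k) s' i else 0.
Fixpoint dnc (T : finType) (G : rel T) (s : seq T) (i : T) : nat :=
  if s is k :: s' then ((k == i) && ~~ is_source G k) + dnc (flip G k) s' i else 0.

Lemma upc_cat (T : finType) (G : rel T) s1 s2 i :
  upc G (s1 ++ s2) i = upc G s1 i + upc (app G s1) s2 i.
Proof. by elim: s1 G => [|k s1 IH] G //=; rewrite IH addnA. Qed.
Lemma dnc_cat (T : finType) (G : rel T) s1 s2 i :
  dnc G (s1 ++ s2) i = dnc G s1 i + dnc (app G s1) s2 i.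
Proof. by elim: s1 G => [|k s1 IH] G //=; rewrite IH addnA. Qed.

Lemma updn_count (T : finType) (G : rel T) s i : upc G s i + dnc G s i = count_mem i s.
Proof.
elim: s G => [|k s IH] G //=. rewrite -(IH (flip G k)).
case: (k == i); case: (is_source G k) => /=; lia.
Qed.

Definition bal (T : finType) (G : rel T) (s s' : seq T) :=
  forall i, upc G s i + dnc G s' i = upc G s' i + dnc G s i.

Lemma bal_cat (T : finType) (G : rel T) p s s' :
  bal (app G p) s s' -> bal G (p ++ s) (p ++ s').
Proof. move=> H i; rewrite !upc_cat !dnc_cat; have := H i; lia. Qed.

Lemma bal_ii (T : finType) (e : rel T) (G : rel T) i r :
  is_orientation e G -> (exists n, e i n) -> is_source G i || is_sink G i ->
  bal G (i :: i :: r) r.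
Proof.
move=> HG [n Hn] Hok k /=. rewrite flipK src_flip_self.
have := excl HG Hn.
case: (i == k); case: (is_source G i) Hok; case: (is_sink G i) => //= _ _; lia.
Qed.

Lemma bal_swap (T : finType) (e : rel T) (G : rel T) i j r :
  (forall x y, e x y = e y x) -> is_orientation e G -> ~~ e i j ->
  bal G (j :: i :: r) (i :: j :: r).
Proof.
move=> esym HG Hn k.
case: (eqVneq i j) => [<-|Hij]; first lia.
rewrite /= (flipC G i j) (src_flip_other esym HG Hij Hn).
rewrite (@src_flip_other _ e) //; last by rewrite esym.
  2: by rewrite eq_sym.
lia.
Qed.

Lemma step_bal (T : finType) (e : rel T) (Gam : rel T) w w' :
  (forall x y, e x y = e y x) -> is_orientation e Gam -> (forall x, exists n, e x n) ->
  rel_step e Gam w w' -> bal Gam (rev w) (rev w').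
Proof.
move=> esym HG Hnb [w1 w2 i H1 _ | w1 w2 i j Hn H1 _].
- rewrite !rev_cat /= -catA /=.
  apply: bal_cat; apply: (bal_ii (e := e)); first exact: orient_app.
    exact: Hnb.
  move: H1; rewrite /composable !rev_cat /= -catA /= => /apply_ok_cat [_] /=. tauto.
- rewrite !rev_cat /= -!catA /=.
  apply: bal_cat; apply: (bal_swap (e := e)) => //; exact: orient_app.
Qed.

Lemma same_bal (T : finType) (e : rel T) (Gam : rel T) w w' :
  (forall x y, e x y = e y x) -> is_orientation e Gam -> (forall x, exists n, e x n) ->
  same_morphism e Gam w w' -> bal Gam (rev w) (rev w').
Proof.
move=> esym HG Hnb; elim => [x y Hs | x | x y _ IH | x y z _ IH1 _ IH2].
- exact: step_bal Hs.
- move=> i; lia.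
- move=> i; have := IH i; lia.
- move=> i; have := IH1 i; have := IH2 i; lia.
Qed.

Lemma step_odd (T : finType) (e : rel T) (Gam : rel T) w w' :
  same_morphism e Gam w w' -> odd (size w) = odd (size w').
Proof.
elim => [x y [w1 w2 i _ _ | w1 w2 i j _ _ _] | x | x y _ IH | x y z _ IH1 _ IH2] //.
- by rewrite !size_cat /= addnS addnS /= negbK.
- by rewrite !size_cat.
- by rewrite IH1.
Qed.

Definition condL (T : finType) (e : rel T) (s : seq T) :=
  forall a b c x, s = a ++ x :: b ++ x :: c -> exists2 j, j \in b & e x j.

Lemma condL_infix (T : finType) (e : rel T) a0 s c0 :
  condL e (a0 ++ s ++ c0) -> condL e s.
Proof.
move=> H a b c x Es; apply: (H (a0 ++ a) b (c ++ c0)).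
by rewrite Es -!catA /= -!catA.
Qed.

Lemma first_occ (T : eqType) (m : T) s : m \in s -> exists a b, s = a ++ m :: b /\ m \notin a.
Proof.
elim: s => [|x s IH] //; rewrite in_cons; case: (eqVneq m x) => [E|Hmx] /= H.
  by subst x; exists [::], s.
have [a [b [-> Ha]]] := IH H; exists (x :: a), b; split => //.
by rewrite in_cons negb_or Hmx.
Qed.

Lemma edge_app (T : finType) (G : rel T) q k m :
  k \notin q -> m != k ->
  app G q k m = (if odd (count_mem m q) then G m k else G k m).
Proof.
elim: q G => [|x q IH] G //=; rewrite in_cons negb_or => /andP[Hkx Hq] Hmk.
rewrite IH // /flip [_ == x]eq_sym (negbTE Hkx) /=.
case: (eqVneq x m) => [_|Hxm] /=; first by case: odd.
by [].
Qed.

Lemma upc_notin (T : finType) (G : rel T) q k : k \notin q -> upc G q k = 0.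
Proof. move/count_memPn => Hc; have := updn_count G q k; lia. Qed.
Lemma dnc_notin (T : finType) (G : rel T) q k : k \notin q -> dnc G q k = 0.
Proof. move/count_memPn => Hc; have := updn_count G q k; lia. Qed.

Lemma no_bad (T : finType) (e : rel T) n :
  (forall x y, e x y = e y x) -> (forall x, ~~ e x x) ->
  forall G k q, size q < n -> is_orientation e G ->
  apply_ok G (k :: q ++ [:: k]) -> k \notin q -> condL e (k :: q ++ [:: k]) ->
  is_source G k = is_source (app (flip G k) q) k.
Proof.
move=> esym enl; elim: n => [|n IHn] G k q //= Hsz HG Hok Hkq Hc.
have [m Hmq Hkm] := Hc [::] q [::] k erefl.
have Hmk : m != k by apply/eqP => E; move: Hkm; rewrite E (negbTE (enl k)).
move: Hok => /= [Hok1]; move/apply_ok_cat => [Hokq /= [Hok2 _]].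
have HG' : is_orientation e (flip G k) by exact: orient_flip.
have HG2 := orient_app q esym HG'.
rewrite (type_edge esym HG Hkm Hok1) (type_edge esym HG2 Hkm Hok2).
rewrite edge_app // /flip !eqxx /=.
rewrite orbT. case: (boolP (odd (count_mem m q))) => Hodd //.
exfalso.
have [p [s [Eq Hp]]] := first_occ Hmq.
have Hms : m \in s.
  apply: contraT => /count_memPn Hs0; move: Hodd; rewrite Eq count_cat /= eqxx Hs0.
  by move/count_memPn: Hp => ->.
have [q' [r [Es Hq']]] := first_occ Hms.
subst q s.
set H := app (flip G k) p.
have HH : is_orientation e H by exact: orient_app.
have Hokall : apply_ok H (m :: q' ++ m :: r).
  by move/apply_ok_cat: Hokq => [_].
have Hokp : apply_ok H (m :: q' ++ [:: m]).
  move: Hokall => /= [Ho1]; rewrite -cat1s catA => /apply_ok_cat [Ho2 _]; by split.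
have Hkq' : k \notin q'.
  by move: Hkq; apply: contra => Hk; rewrite !(mem_cat, in_cons) Hk !orbT.
have Hcq : condL e (m :: q' ++ [:: m]).
  apply: (@condL_infix _ _ (k :: p) _ (r ++ [:: k])).
  by move: Hc; rewrite -!catA /= -!catA.
have := IHn H m q'.
have Hsz' : size q' < n.
  move: Hsz; rewrite !size_cat /= size_cat /=; lia.
move=> /(_ Hsz' HH Hokp Hq' Hcq).
have Hmk' : e m k by rewrite esym.
have HH' : is_orientation e (flip H m) by exact: orient_flip.
move: Hokp => /= [Hokm1]; move/apply_ok_cat => [_ /= [Hokm2 _]].
rewrite (type_edge esym HH Hmk' Hokm1).
rewrite (type_edge esym (orient_app q' esym HH') Hmk' Hokm2).
rewrite edge_app //; last by rewrite eq_sym.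
have -> : count_mem k q' = 0 by apply/count_memPn.
rewrite /= /flip eqxx /=.
have := HH k m; rewrite esym Hmk'.
by case: (H m k); case: (H k m).
Qed.

Lemma updn0 (T : finType) (e : rel T) :
  (forall x y, e x y = e y x) -> (forall x, ~~ e x x) ->
  forall s G, is_orientation e G -> apply_ok G s -> condL e s ->
  forall i, upc G s i = 0 \/ dnc G s i = 0.
Proof.
move=> esym enl; elim => [|k s IH] G HG Hok Hc i; first by left.
move: (Hok) => /= [Hok1 Hoks].
have Hcs : condL e s by apply: (@condL_infix _ _ [:: k] _ [::]); rewrite cats0.
have IHs := IH _ (orient_flip k esym HG) Hoks Hcs.
case Eki: (k == i); last first.
  by move: (IHs i); rewrite !add0n.
move/eqP: Eki => Eki; subst i.
case: (boolP (k \in s)) => Hks; last first.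
  rewrite /= upc_notin // dnc_notin // ?eqxx /=.
  by case: (is_source G k); [right|left].
have [q [r [Es Hq]]] := first_occ Hks.
have Hokq : apply_ok G (k :: q ++ [:: k]).
  split => //; move: Hoks; rewrite Es => /apply_ok_cat [H1 /= [H2 _]].
  by apply/apply_ok_cat; split => //=.
have Hcq : condL e (k :: q ++ [:: k]).
  apply: (@condL_infix _ _ [::] _ r); move: Hc; rewrite Es /= -catA //.
have Ht := no_bad esym enl (ltnSn (size q)) HG Hokq Hq Hcq.
have := IHs k.
rewrite /= ?eqxx /= Es upc_cat dnc_cat upc_notin // dnc_notin // /= ?eqxx /= -Ht.
case: (is_source G k) => /=; lia.
Qed.

Lemma size_sum (T : finType) (s : seq T) : size s = \sum_(i : T) count_mem i s.
Proof.
elim: s => [|k s IH] /=; first by rewrite big1.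
rewrite big_split /= -IH (bigD1 k) //= eqxx big1 ?addn0 //.
by move=> i /negbTE; rewrite eq_sym => ->.
Qed.

Lemma ok_swap (T : finType) (e : rel T) (G : rel T) p x y r :
  (forall x y, e x y = e y x) -> is_orientation e G -> ~~ e x y ->
  apply_ok G (p ++ x :: y :: r) -> apply_ok G (p ++ y :: x :: r).
Proof.
move=> esym HG Hn /apply_ok_cat [Hp Hr]; apply/apply_ok_cat; split => //.
case: (eqVneq x y) => [E|Hxy]; first by subst y.
have HH := orient_app p esym HG.
move: Hr => /= [Hx [Hy Hr]]; rewrite flipC in Hr.
have Hyx : y != x by rewrite eq_sym.
have Hn' : ~~ e y x by rewrite esym.
rewrite (src_flip_other esym HH Hyx Hn') (snk_flip_other esym HH Hyx Hn') in Hy.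
rewrite (src_flip_other esym HH Hxy Hn) (snk_flip_other esym HH Hxy Hn) //.
Qed.

Lemma comp_swap (T : finType) (e : rel T) (G : rel T) w1 w2 x y :
  (forall x y, e x y = e y x) -> is_orientation e G -> ~~ e x y ->
  composable G (w1 ++ [:: x; y] ++ w2) -> composable G (w1 ++ [:: y; x] ++ w2).
Proof.
move=> esym HG Hn; rewrite /composable !rev_cat /= -!catA /=.
apply: ok_swap => //; by rewrite esym.
Qed.

Lemma comp_ii (T : finType) (G : rel T) w1 w2 i :
  composable G (w1 ++ [:: i; i] ++ w2) -> composable G (w1 ++ w2).
Proof.
rewrite /composable !rev_cat /= -!catA /= => /apply_ok_cat [H1 /= [_ [_ H2]]].
apply/apply_ok_cat; split => //; by rewrite flipK in H2.
Qed.

Lemma move_i (T : finType) (e : rel T) (Gam : rel T) i a :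
  (forall x y, e x y = e y x) -> is_orientation e Gam ->
  (forall x, x \in a -> ~~ e i x) ->
  forall w1 w3, composable Gam (w1 ++ i :: a ++ w3) ->
  same_morphism e Gam (w1 ++ i :: a ++ w3) (w1 ++ a ++ i :: w3) /\
  composable Gam (w1 ++ a ++ i :: w3).
Proof.
move=> esym HG; elim: a => [|x a IH] Ha w1 w3 Hc /=.
  by split => //; apply: rst_refl.
have Hix : ~~ e i x by apply: Ha; rewrite in_cons eqxx.
have Hc' : composable Gam ((w1 ++ [:: x]) ++ i :: a ++ w3).
  rewrite -catA /=; have := @comp_swap _ e Gam w1 (a ++ w3) i x esym HG Hix Hc.
  by [].
have [IH1 IH2] := IH (fun z hz => Ha z (mem_behead (s := x :: a) hz)) _ _ Hc'.
move: IH1 IH2; rewrite -!catA /= => IH1 IH2.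
split => //.
apply: rst_trans IH1; apply: rst_step.
exact: (@step_R2 _ e Gam w1 (a ++ w3) i x Hix Hc (@comp_swap _ e Gam w1 (a ++ w3) i x esym HG Hix Hc)).
Qed.

Theorem mainTheorem15 (T : finType) (e : rel T) (Gam : rel T) (w : seq T) :
  is_tree e -> is_orientation e Gam -> composable Gam w ->
  (reduced e Gam w <->
   (forall (w1 w2 w3 : seq T) (i : T), w = w1 ++ i :: w2 ++ i :: w3 ->
      exists2 j, j \in w2 & e i j)).
Proof.
move=> [Tpos esym enl Hconn Hacyc] HG Hcw; split.
- move=> Hred w1 w2 w3 i Ew.
  case: (boolP (has (e i) w2)) => [/hasP [j Hj Hij]|Hn]; first by exists j.
  exfalso.
  have [a [w3' [Ew' Ha]]] : exists a w3', w = w1 ++ i :: a ++ i :: w3' /\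
      (forall x, x \in a -> ~~ e i x).
    case: (boolP (i \in w2)) => Hi.
    + have [a [b [Ew2 Hia]]] := first_occ Hi.
      exists a, (b ++ i :: w3); split; first by rewrite Ew Ew2 -catA.
      by move=> x Hx; apply: (hasPn Hn); rewrite Ew2 mem_cat Hx.
    + exists w2, w3; split => // x Hx; exact: (hasPn Hn).
  have Hc' : composable Gam (w1 ++ i :: a ++ i :: w3') by rewrite -Ew'.
  have [Hs1 Hc1] := move_i esym HG Ha Hc'.
  have Hc2 : composable Gam ((w1 ++ a) ++ [:: i; i] ++ w3') by rewrite -catA.
  have Hs2 := @step_R1 _ e Gam _ _ _ Hc2 (comp_ii Hc2).
  have := Hred ((w1 ++ a) ++ w3') (comp_ii Hc2).
  have Hs : same_morphism e Gam w ((w1 ++ a) ++ w3').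
    rewrite Ew'; apply: rst_trans Hs1 _; apply: rst_step.
    by move: Hs2; rewrite -!catA.
  move=> /(_ Hs); rewrite Ew' /= !size_cat /= !size_cat /=; lia.
- move=> Hcond w' Hcw' Hsame.
  case: (boolP [forall x, [exists y, e x y]]) => Hall.
  + have Hnb : forall x, exists n, e x n.
      by move=> x; move/forallP: Hall => /(_ x) /existsP.
    have Hb := same_bal esym HG Hnb Hsame.
    have HcL : condL e (rev w).
      move=> a b c x E.
      have Ew : w = rev c ++ x :: rev b ++ x :: rev a.
        rewrite -(revK w) E !(rev_cat, rev_cons) -!cats1 -!catA //.
      have [j Hj Hxj] := Hcond _ _ _ _ Ew; exists j => //; by rewrite -mem_rev.
    have H0 := updn0 esym enl HG Hcw HcL.
    rewrite -(size_rev w) -(size_rev w') !size_sum; apply: leq_sum => i _.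
    rewrite -!(updn_count Gam); have := Hb i; have := H0 i; lia.
  + move/forallPn: Hall => [x /existsPn Hx].
    have Hall : forall y, y = x.
      move=> y; have /connectP [p Hp ->] := Hconn x y.
      by case: p Hp => [|z p] //= /andP [Hxz _]; move: (Hx z); rewrite Hxz.
    case: w Hcw Hcond Hsame => [|a [|b r]] Hcw Hcond Hsame //.
    * have := step_odd Hsame; rewrite /=; case: w' {Hcw' Hsame} => //.
    * have [j //] : exists2 j, j \in [::] & e a j.
        by apply: (Hcond [::] [::] r a); rewrite (Hall b) (Hall a).
Qed.
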